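(* For $n\ge1$ let $$p_n(t)=\sum_{\tau\in T_n}t^{\,n-v(\tau)},$$ where $v(\tau)$ is the number of internal vertices of $\tau$. This is the Poincaré polynomial of the Stasheff polytope $\mathcal K^{n-1}$, counting its cells by dimension. Let $$f^{\mathcal K}_t(x)=\sum_{n\ge1}(-1)^n p_n(t)\,x^n.$$ Then $$f^{\mathcal K}_t(x)=\frac{-(1+(2+t)x)+\sqrt{1+2(2+t)x+t^2x^2}}{2(1+t)x}.$$ Equivalently, $f^{\mathcal K}_t$ is the compositional inverse of $$f^{\Delta}_t(x)=\sum_{n\ge1}(-1)^n\frac{(1+t)^n-1}{t}\,x^n=\frac{-x}{(1+x)(1+(1+t)x)},$$ i.e. $f^{\Delta}_t(f^{\mathcal K}_t(x))=x$.
   Context: $T_n$ ($n\ge1$) is the set of planar rooted trees with $n+1$ leaves in which every internal vertex has at least two inputs. In particular, binary trees have $n$ internal vertices and the corolla has one. *)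

(* Defs.v *)
(* Formal power series in x with coefficients in Q[t] = {poly rat},
   represented as coefficient functions nat -> {poly rat}; t is 'X. *)
From HB Require Import structures.
From mathcomp Require Import all_boot all_order all_algebra.
From Stdlib Require List.
Set Implicit Arguments. Unset Strict Implicit. Unset Printing Implicit Defensive.
Import Order.TTheory GRing.Theory Num.Theory.
Local Open Scope ring_scope.

Inductive tree : Type := Node of seq tree.

Fixpoint leaves (t : tree) : nat :=
  match t with
  | Node [::] => 1
  | Node ts => sumn (map leaves ts)
  end.

Fixpoint internal (t : tree) : nat :=
  match t with
  | Node [::] => 0
  | Node ts => (sumn (map internal ts)).+1
  end.

Fixpoint valid (t : tree) : bool :=
  match t with
  | Node [::] => true
  | Node ts => (2 <= size ts)%N && all valid ts
  end.

Definition in_T (n : nat) (t : tree) : Prop := valid t /\ leaves t = n.+1.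

Definition enumerates (n : nat) (s : seq tree) : Prop :=
  List.NoDup s /\ forall t, List.In t s <-> in_T n t.

Definition pK (n : nat) (s : seq tree) : {poly rat} :=
  \sum_(tau <- s) 'X^(n - internal tau).

Definition series := nat -> {poly rat}.

Definition smul (F G : series) : series :=
  fun n => \sum_(i < n.+1) F i * G (n - i)%N.

Definition sone : series := fun n => if n is 0 then 1 else 0.

Definition spow (F : series) (k : nat) : series := iter k (smul F) sone.

(* composition F(G(x)), meaningful when G 0 = 0 *)
Definition scomp (F G : series) : series :=
  fun n => \sum_(k < n.+1) F k * spow G k n.

Definition sx : series := fun n => if n == 1%N then 1 else 0.

Definition fDelta : series :=
  fun n => if n is 0 then 0 else (-1) ^+ n * (((1 + 'X) ^+ n - 1) %/ 'X).

(* Main.v *)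
Require Import Defs.
From HB Require Import structures.
From mathcomp Require Import all_boot all_order all_algebra.
From Stdlib Require List.
From Stdlib Require Import FunctionalExtensionality.
From mathcomp Require Import zify ring lra.
Import Order.TTheory GRing.Theory Num.Theory.
Local Open Scope ring_scope.

Fixpoint enc (t : tree) : GenTree.tree unit :=
  let: Node ts := t in GenTree.Node 0 (map enc ts).
Fixpoint dec (g : GenTree.tree unit) : tree :=
  match g with GenTree.Leaf _ => Node [::] | GenTree.Node _ gs => Node (map dec gs) end.
Fixpoint encK (t : tree) : dec (enc t) = t :=
  match t with Node ts => f_equal Node
    ((fix aux ts := match ts return map dec (map enc ts) = ts with
      | [::] => erefl | t' :: ts' => f_equal2 cons (encK t') (aux ts') end) ts) end.
HB.instance Definition _ := Countable.copy tree (can_type encK).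

Definition tree_indF (P : tree -> Prop)
  (H : forall ts, List.Forall P ts -> P (Node ts)) : forall t, P t :=
  fix IH t := let: Node ts := t in H ts
    ((fix aux ts := match ts return List.Forall P ts with
      | [::] => List.Forall_nil _ | t' :: ts' => List.Forall_cons _ (IH t') (aux ts') end) ts).

Lemma tree_ind2 (P : tree -> Prop) :
  (forall ts, (forall t, t \in ts -> P t) -> P (Node ts)) -> forall t, P t.
Proof.
move=> H; apply: tree_indF => ts HF; apply: H.
elim: HF => // t ts' Pt _ IH u; rewrite in_cons => /orP[/eqP->|/IH]//.
Qed.

Lemma leaves_gt0 t : (0 < leaves t)%N.
Proof.
elim/tree_ind2: t => -[|t ts] IH //=.
have := IH t (mem_head _ _); lia.
Qed.

Lemma sumn_leaves_ge (f : seq tree) : (size f <= sumn (map leaves f))%N.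
Proof. elim: f => //= t f IH; have := leaves_gt0 t; lia. Qed.

Lemma int_lt_leaves t : valid t -> (internal t < leaves t)%N.
Proof.
elim/tree_ind2: t => -[|t ts] IH //= /andP[Hs Hv].
suff: (sumn (map internal (t :: ts)) + size (t :: ts) <= sumn (map leaves (t::ts)))%N.
  rewrite /=; move: Hs => /=; lia.
have {Hs}: {in t :: ts, forall u, internal u < leaves u}%N.
  move=> u Hu; apply: IH => //; move: Hu Hv; rewrite in_cons => /orP[/eqP->|Hu] /andP[? /allP]; auto.
elim: (t :: ts) => //= u us IHu H.
have := H u (mem_head _ _); have := IHu (fun v Hv => H v (mem_behead (s:=u::us) Hv)); lia.
Qed.

Definition w (t : tree) : {poly rat} := 'X^(leaves t - 1 - internal t)%N.

Lemma w_node f : (2 <= size f)%N -> all valid f ->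
  w (Node f) = 'X^(size f - 2) * \prod_(t <- f) w t.
Proof.
case: f => [|t0 f0] // Hs Hv.
have -> : \prod_(t <- t0 :: f0) w t = 'X^(sumn (map (fun t => leaves t - 1 - internal t)%N (t0::f0))).
  elim: (t0 :: f0) => [|u us IH]; first by rewrite big_nil.
  by rewrite big_cons IH /= exprD.
rewrite /w -exprD; congr ('X^ _).
have : (sumn (map leaves (t0::f0)) = sumn (map (fun t => leaves t - 1 - internal t)%N (t0::f0)) + size (t0::f0) + sumn (map internal (t0::f0)))%N.
  elim: (t0 :: f0) Hv => //= u us IH /andP[Hu Hus].
  rewrite IH //; have := int_lt_leaves _ Hu; lia.
rewrite /=; move: Hs => /=; lia.
Qed.

Fixpoint forests (T : nat -> seq tree) (k m : nat) : seq (seq tree) :=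
  if k is k'.+1 then
    flatten [seq [seq t :: f | t <- T j, f <- forests T k' (m - j)] | j <- iota 1 (m - k')]
  else if m == 0%N then [:: [::]] else [::].

Fixpoint trees (d m : nat) : seq tree :=
  if d is d'.+1 then
    (if m == 1%N then [:: Node [::]] else [::]) ++
    flatten [seq [seq Node f | f <- forests (trees d') k m] | k <- iota 2 m.-1]
  else [::].

Lemma forests_sound T (P : pred tree) :
  (forall j x, x \in T j -> P x && (leaves x == j)) ->
  forall k m f, f \in forests T k m -> [&& size f == k, all P f & sumn (map leaves f) == m].
Proof.
move=> HT; elim=> [|k IH] m f /=.
  by case: eqP => [->|]; rewrite ?inE // => /eqP->.
case/flatten_mapP => j; rewrite mem_iota => Hj /allpairsP [[t f'] /= [Ht Hf ->]].
case/andP: (HT _ _ Ht) => Pt /eqP Lt; case/and3P: (IH _ _ Hf) => /eqP Sf Af /eqP Lf.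
rewrite /= Sf Pt Af eqxx /=; apply/eqP; move: Hj; lia.
Qed.

Lemma trees_sound d m x : x \in trees d m -> valid x && (leaves x == m).
Proof.
elim: d m x => [//|d IH] m x /=; rewrite mem_cat => /orP[].
  by case: eqP => [->|]; rewrite ?inE // => /eqP->.
case/flatten_mapP => k; rewrite mem_iota => Hk /mapP [f Hf ->].
case/and3P: (@forests_sound (trees d) valid IH _ _ _ Hf) => /eqP Sf Af /eqP Lf.
case: f Sf Af Lf Hf => [|t f] /= Sf; first by move: Hk; rewrite -Sf.
move=> -> -> _; rewrite Sf eqxx andbT; move: Hk; lia.
Qed.

Lemma forests_complete T (P : pred tree) M :
  (forall j x, (0 < j <= M)%N -> P x -> leaves x = j -> x \in T j) ->
  forall k m f, (m <= M + k.-1)%N -> size f = k -> all P f ->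
  sumn (map leaves f) = m -> f \in forests T k m.
Proof.
move=> HT; elim=> [|k IH] m f Hm.
  by case: f => //= _ _ <-; rewrite inE.
case: f => [|t f] //= [Sf] /andP[Pt Af] Lf.
apply/flatten_mapP; exists (leaves t).
  rewrite mem_iota; have := leaves_gt0 t; have := sumn_leaves_ge f; rewrite Sf; lia.
apply/allpairsP; exists (t, f); split => //=.
  apply: HT => //; have := leaves_gt0 t; have := sumn_leaves_ge f; rewrite Sf.
  case: k IH Hm Sf => [|k] IH Hm Sf /=; lia.
apply: IH => //; last lia.
have := leaves_gt0 t; case: k Hm Sf => [|k] Hm Sf /=; lia.
Qed.

Lemma trees_complete d m x : (m <= d)%N -> valid x -> leaves x = m -> x \in trees d m.
Proof.
elim: d m x => [|d IH] m x Hm Vx Lx.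
  by have := leaves_gt0 x; move: Hm; lia.
rewrite /= mem_cat; case: x Vx Lx => -[|t f] Vx Lx.
  by move: Lx => /= <-; rewrite inE eqxx.
apply/orP; right; apply/flatten_mapP; exists (size (t :: f)).
  rewrite mem_iota; move: Vx => /= /andP[H2 _]; have := sumn_leaves_ge (t::f).
  move: Lx => /= Lx; rewrite Lx /=; lia.
apply/mapP; exists (t :: f) => //.
move: (Vx) => /andP[H2 Af].
apply: (@forests_complete (trees d) valid d) => //.
- move=> j y Hj Vy Ly; apply: IH => //; lia.
- move: H2; rewrite /=; move: Hm; case: (size f) => [|q] /=; lia.
Qed.

Lemma uniq_flatten_key (A B : eqType) (key : B -> A) (s : seq A) (g : A -> seq B) :
  uniq s -> (forall a, a \in s -> uniq (g a)) ->
  (forall a y, a \in s -> y \in g a -> key y = a) -> uniq (flatten (map g s)).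
Proof.
elim: s => //= a s IH /andP[ans us] Hu Hk.
rewrite cat_uniq Hu ?mem_head // IH //; last first.
- by move=> b y bs; apply: Hk; rewrite inE bs orbT.
- by move=> b bs; apply: Hu; rewrite inE bs orbT.
rewrite andbT; apply/hasPn => y /flatten_mapP [b bs yb]; apply/negP => ya.
have e1 := Hk a y (mem_head _ _) ya; have e2 := Hk b y (mem_behead (s:=a::s) bs) yb.
by move: ans; rewrite -e1 e2 bs.
Qed.

Lemma forests_uniq T : (forall j, uniq (T j)) -> (forall j x, x \in T j -> leaves x = j) ->
  forall k m, uniq (forests T k m).
Proof.
move=> HU HL; elim=> [|k IH] m /=; first by case: eqP.
apply: (@uniq_flatten_key _ _ (fun f => leaves (head (Node [::]) f))).
- exact: iota_uniq.
- move=> j _; apply: allpairs_uniq => //; by move=> [t f] [t' f'] _ _ /= [-> ->].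
- by move=> j y _ /allpairsP [[t f] /= [Ht _ ->]]; apply: HL.
Qed.

Lemma trees_uniq d m : uniq (trees d m).
Proof.
elim: d m => [//|d IH] m /=.
have HL : forall j x, x \in trees d j -> leaves x = j.
  by move=> j x /trees_sound /andP[_ /eqP].
rewrite cat_uniq; apply/and3P; split.
- by case: eqP.
- apply/hasPn => y /flatten_mapP [k]; rewrite mem_iota => Hk /mapP [f Hf ->].
  case: eqP => // _; rewrite inE; apply/negP => /eqP [Ef].
  case/and3P: (@forests_sound (trees d) predT (fun j x H => introT eqP (HL j x H)) _ _ _ Hf) => /eqP Sf _ _.
  by move: Hk; rewrite -Sf Ef.
- apply: (@uniq_flatten_key _ _ (fun x => let: Node f := x in size f)).
  + exact: iota_uniq.
  + move=> k _; rewrite map_inj_uniq; first exact: forests_uniq.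
    by move=> f f' [].
  + move=> k y _ /mapP [f Hf ->].
    case/and3P: (@forests_sound (trees d) predT (fun j x H => introT eqP (HL j x H)) _ _ _ Hf).
    by move=> /eqP.
Qed.

Lemma spowS F k : spow F k.+1 = smul F (spow F k).
Proof. by []. Qed.

Lemma spow_vanish (a : series) : a 0%N = 0 -> forall k n, (n < k)%N -> spow a k n = 0.
Proof.
move=> a0; elim=> [//|k IH] n Hn; rewrite spowS /smul big1 // => -[[|i] Hi] _ /=.
  by rewrite a0 mul0r.
by rewrite IH ?mulr0 //; move: Hi Hn; lia.
Qed.

Lemma spow_ext (a b : series) m : (forall j, (j <= m)%N -> a j = b j) ->
  forall k, spow a k m = spow b k m.
Proof.
move=> H k; elim: k m H => [//|k IH] m H; rewrite !spowS /smul.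
apply: eq_bigr => -[i Hi] _ /=; rewrite H // IH // => j Hj; apply: H; lia.
Qed.

Definition asum (T : nat -> seq tree) : series :=
  fun j => if j is 0 then 0 else \sum_(t <- T j) w t.

Lemma forests_sum T k m :
  \sum_(f <- forests T k m) \prod_(t <- f) w t = spow (asum T) k m.
Proof.
elim: k m => [|k IH] m /=.
  by case: m => [|m]; rewrite ?big_seq1 ?big_nil ?big_nil.
rewrite big_flatten big_map /= -spowS /= /smul.
rewrite -(big_mkord xpredT (fun i => asum T i * spow (asum T) k (m - i)%N)).
rewrite big_ltn // /= mul0r add0r (big_cat_nat _ (n := (m - k).+1)) //=; last lia.
rewrite [X in _ + X]big_nat_cond [X in _ + X]big1 ?addr0; last first.
  move=> i /andP[/andP[Hi1 Hi2] _]; rewrite spow_vanish ?mulr0 //; lia.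
rewrite /index_iota subSS subn0; apply: eq_big_seq => j; rewrite mem_iota => Hj.
rewrite big_allpairs_dep /=.
case: j Hj => [//|j] Hj /=.
rewrite -IH big_distrl /=; apply: eq_bigr => t _; rewrite big_distrr /=.
by apply: eq_bigr => f _; rewrite big_cons.
Qed.

Lemma trees_wsum d m : \sum_(x <- trees d.+1 m) w x =
  (m == 1%N)%:R + \sum_(k <- iota 2 m.-1) 'X^(k - 2) * spow (asum (trees d)) k m.
Proof.
rewrite /= big_cat; congr (_ + _).
  by case: eqP => _; rewrite ?big_seq1 ?big_nil // /w /= expr0.
rewrite big_flatten big_map; apply: eq_big_seq => k; rewrite mem_iota => Hk.
rewrite big_map -forests_sum big_distrr; apply: eq_big_seq => f Hf /=.
have HL : forall j x, x \in trees d j -> valid x && (leaves x == j) by move=> j x /trees_sound.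
case/and3P: (@forests_sound (trees d) valid HL _ _ _ Hf) => /eqP Sf Af _.
rewrite w_node // Sf; last lia. by [].
Qed.

Definition b : series := fun m => \sum_(x <- trees m.+1 m) w x.

Lemma b0 : b 0%N = 0.
Proof. by rewrite /b /= big_nil. Qed.

Lemma b_perm d j : (0 < j <= d)%N -> \sum_(x <- trees d j) w x = b j.
Proof.
move=> Hj; apply: perm_big; apply: uniq_perm; rewrite ?trees_uniq // => x.
apply/idP/idP => /trees_sound /andP[Vx /eqP Lx]; apply: trees_complete => //; lia.
Qed.

Lemma b_rec0 m : b m = (m == 1%N)%:R + \sum_(k <- iota 2 m.-1) 'X^(k - 2) * spow b k m.
Proof.
rewrite {1}/b trees_wsum; congr (_ + _); apply: eq_bigr => k _; congr (_ * _).
apply: spow_ext => -[|j] Hj /=; first by rewrite b0.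
by rewrite b_perm //; lia.
Qed.

Lemma b_rec m K : (m.-1 <= K)%N ->
  b m = (m == 1%N)%:R + \sum_(j < K) 'X^j * spow b j.+2 m.
Proof.
move=> HK; rewrite b_rec0; congr (_ + _).
rewrite -[2%N]addn0 iotaDl big_map.
have -> : iota 0 m.-1 = index_iota 0 m.-1 by rewrite /index_iota subn0.
rewrite big_mkord.
under eq_bigr => j _ do rewrite addn0 addKn add2n.
rewrite (big_ord_widen K (fun j => 'X^j * spow b j.+2 m)) //.
rewrite [LHS]big_mkcond /=; apply: eq_bigr => -[j Hj] _ /=.
case: ifP => // Hjm.
rewrite -!spowS spow_vanish ?mulr0 ?b0 //; move: Hjm; lia.
Qed.

Lemma spow_sgn (F : series) k n :
  spow (fun i => (-1) ^+ i * F i) k n = (-1) ^+ n * spow F k n.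
Proof.
elim: k n => [|k IH] n.
  by case: n => [|n] /=; rewrite ?expr0 ?mul1r ?mulr0.
rewrite !spowS /smul mulr_sumr; apply: eq_bigr => -[i Hi] _ /=.
rewrite IH mulrACA -exprD subnKC //.
Qed.

Definition bs : series := fun i => (-1) ^+ i * b i.

Lemma bs0 : bs 0%N = 0.
Proof. by rewrite /bs b0 mulr0. Qed.

Lemma b1 : b 1%N = 1.
Proof. by rewrite (@b_rec 1 0) // big_ord0 addr0. Qed.

Lemma bs_rec m K : (m.-1 <= K)%N ->
  bs m = - (m == 1%N)%:R + \sum_(j < K) 'X^j * spow bs j.+2 m.
Proof.
move=> HK; rewrite /bs (b_rec _ _ HK) mulrDr mulr_sumr; congr (_ + _).
  by case: eqP => [->|]; rewrite ?expr1 ?mulN1r // mulr0 oppr0.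
apply: eq_bigr => j _; rewrite spow_sgn; ring.
Qed.

Notation PP := {poly {poly rat}}.
Definition tr (N : nat) (F : series) : PP := \poly_(i < N) F i.

Lemma coef_tr N F i : (tr N F)`_i = if (i < N)%N then F i else 0.
Proof. by rewrite /tr coef_poly. Qed.

Lemma coef_tr_mul N F G n : (n < N)%N -> (tr N F * tr N G)`_n = smul F G n.
Proof.
move=> Hn; rewrite coefM; apply: eq_bigr => -[i Hi] _ /=.
by rewrite !coef_tr ifT ?ifT //; lia.
Qed.

Lemma coef_tr_pow N F k n : (n < N)%N -> ((tr N F) ^+ k)`_n = spow F k n.
Proof.
elim: k n => [|k IH] n Hn.
  by rewrite expr0 coef1; case: n Hn.
rewrite exprS coefM spowS; apply: eq_bigr => -[i Hi] _ /=.
by rewrite IH ?coef_tr ?ifT //; lia.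
Qed.

Definition eqm N (p q : PP) := forall i, (i < N)%N -> p`_i = q`_i.

Lemma eqmX N (p q r : PP) : p = q + r * 'X^N -> eqm N p q.
Proof. by move=> -> i Hi; rewrite coefD coefMXn Hi addr0. Qed.

Lemma eqm_ex N (p q : PP) : eqm N p q -> exists r, p = q + r * 'X^N.
Proof.
move=> H; exists (drop_poly N (p - q)).
have := poly_take_drop N (p - q).
have -> : take_poly N (p - q) = 0.
  apply/polyP => i; rewrite coef_take_poly coef0 coefB; case: ifP => // Hi.
  by rewrite H // subrr.
by rewrite add0r => ->; rewrite addrC subrK.
Qed.

Lemma eqm_mul N (p pp q qq : PP) : eqm N p pp -> eqm N q qq -> eqm N (p * q) (pp * qq).
Proof.
move=> Hp Hq i Hi; rewrite !coefM; apply: eq_bigr => -[j Hj] _ /=.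
rewrite Hp ?Hq //; lia.
Qed.

Lemma eqm_cancel N (A Z : PP) : A`_0 = 1 -> eqm N (A * Z) 0 -> eqm N Z 0.
Proof.
move=> A0 H i; elim: i {-2}i (leqnn i) => [|i IH] j Hj HjN.
  move: Hj HjN; rewrite leqn0 => /eqP -> HjN; have := H 0%N HjN.
  by rewrite coef0M A0 mul1r.
have := H j HjN; rewrite coefM big_ord_recl /= A0 mul1r subn0 coef0.
rewrite big1 ?addr0 // => -[k Hk] _ /=; rewrite IH ?coef0 ?mulr0 // /bump; lia.
Qed.

Lemma eqmXM N (p : PP) : eqm N.+1 ('X * p) 0 -> eqm N p 0.
Proof. by move=> H i Hi; move: (H i.+1 Hi); rewrite coefXM /= !coef0. Qed.

Definition tt : PP := ('X : {poly rat})%:P.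
Definition Fs : series := fun n => if n is 0 then 0 else (-1) ^+ n * b n.+1.
Definition EF (F : PP) : PP :=
  (1 + tt) * 'X * F ^+ 2 + (1 + (2%:R + tt) * 'X) * F + 'X.

Lemma coef_ttX j (p : PP) i : (tt ^+ j * p)`_i = 'X^j * p`_i.
Proof. by rewrite /tt -rmorphXn coefCM. Qed.

Lemma eqm_0X (p : PP) : p`_0 = 0 -> exists r, p = r * 'X.
Proof.
move=> H; have [|r Hr] := @eqm_ex 1 p 0.
  by case=> // _; rewrite H coef0.
by exists r; rewrite Hr add0r expr1.
Qed.

Lemma KEY M : exists r, 'X * EF (tr M.+2 Fs) = r * 'X^(M.+2).
Proof.
set N := M.+2; set Y := tr N bs; set F := tr N Fs.
set D := \sum_(j < M.+1) tt ^+ j * Y ^+ j.+2.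
have h1 : eqm N Y (- 'X + D).
  move=> i Hi; rewrite coef_tr Hi coefD coefN coefX coef_sum (bs_rec i M.+1); last lia.
  congr (_ + _); apply: eq_bigr => j _; rewrite coef_ttX coef_tr_pow //.
have h2 : tt * Y * D = D - Y ^+ 2 + tt ^+ M.+1 * Y ^+ M.+3.
  rewrite /D big_distrr big_ord_recr big_ord_recl /= expr0 mul1r.
  have -> : \sum_(i < M) tt * Y * (tt ^+ i * Y ^+ i.+2) =
            \sum_(i < M) tt ^+ bump 0 i * Y ^+ (bump 0 i).+2.
    by apply: eq_bigr => i _; rewrite /bump /= !exprS; ring.
  move: (\sum_(i < M) _) => S.
  rewrite !exprS; ring.
have [r3 h3] : exists r3, Y ^+ M.+3 = r3 * 'X^N.
  have [|r Hr] := @eqm_0X Y; first by rewrite coef_tr /= bs0.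
  by exists (r ^+ M.+3 * 'X); rewrite Hr exprMn /N !exprS; ring.
have h4 : eqm N Y (- 'X * (1 + F)).
  move=> i Hi; rewrite coef_tr Hi mulNr coefN coefXM.
  case: i Hi => [|i] Hi /=; first by rewrite bs0 oppr0.
  rewrite coefD coef1 coef_tr ifT; last lia.
  rewrite /bs /Fs; case: i Hi => [|i] Hi /=; first by rewrite b1 addr0 expr1 mulN1r.
  by rewrite !exprS; ring.
have [r1 e1] := eqm_ex _ _ _ h1; have [r4 e4] := eqm_ex _ _ _ h4.
rewrite h3 in h2.
set Y0 := - 'X * (1 + F).
set K := 1 - tt * (Y + Y0 + 'X) - (Y + Y0).
exists (tt ^+ M.+1 * r3 - r1 + tt * Y * r1 + r4 * K).
have z1 : Y + 'X - (D + r1 * 'X^N) = 0.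
  by rewrite {1}e1; move: ('X^N) => X; ring.
have z2 : tt * Y * D - (D - Y ^+ 2 + tt ^+ M.+1 * (r3 * 'X^N)) = 0.
  by rewrite h2 subrr.
have z4 : Y - (Y0 + r4 * 'X^N) = 0 by rewrite {1}e4 subrr.
have E0 : (- (1 - tt * Y)) * (Y + 'X - (D + r1 * 'X^N)) +
          (tt * Y * D - (D - Y ^+ 2 + tt ^+ M.+1 * (r3 * 'X^N))) +
          K * (Y - (Y0 + r4 * 'X^N)) = 0.
  by rewrite z1 z2 z4 !mulr0 !addr0.
rewrite /EF; move: E0; rewrite /K /Y0.
move: (tt ^+ M.+1) ('X^N) => c X E0.
apply/eqP; rewrite -subr_eq0 -E0; apply/eqP; ring.
Qed.

Definition ee k : {poly rat} := \sum_(i < k) (1 + 'X) ^+ i.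

Lemma fD_E k : fDelta k = (-1) ^+ k * ee k.
Proof.
case: k => [|k]; first by rewrite /ee big_ord0 mulr0.
rewrite /fDelta /ee; congr (_ * _).
rewrite subrX1 [1 + 'X]addrC addrK mulrC mulpK ?polyX_eq0 //.
Qed.

Lemma eeS k : ee k.+1 = ee k + (1 + 'X) ^+ k.
Proof. by rewrite /ee big_ord_recr. Qed.

Lemma T2 n : smul fDelta
       (fun k => if k == 0%N then 1 else if k == 1%N then 2%:R + 'X
                 else if k == 2%N then 1 + 'X else 0) n = - sx n.
Proof.
rewrite /smul /sx; case: n => [|[|m]].
- by rewrite big_ord1 fD_E /ee big_ord0 mulr0 mul0r oppr0.
- rewrite big_ord_recr big_ord1 !fD_E /= /ee big_ord1 big_ord0; ring.
rewrite big_ord_recr big_ord_recr big_ord_recr big1; last first.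
  move=> i _ /=; rewrite ifN ?ifN ?ifN ?mulr0 //; apply/eqP; have := ltn_ord i; lia.
rewrite !fD_E /= !eeS.
have -> : (m.+2 - m = 2)%N by lia.
have -> : (m.+2 - m.+1 = 1)%N by lia.
rewrite subnn /=; move: (ee m) => e.
rewrite !exprS; ring.
Qed.

Lemma smul_c1 (v : {poly rat}) (G : series) i :
  smul (fun k => if k == 1%N then v else 0) G i = if i is j.+1 then v * G j else 0.
Proof.
rewrite /smul; case: i => [|j]; first by rewrite big_ord1 /= mul0r.
rewrite big_ord_recl big_ord_recl /= mul0r add0r subn1 /=.
by rewrite big1 ?addr0 // => k _; rewrite /bump /= mul0r.
Qed.

Lemma Fs0 : Fs 0%N = 0. Proof. by []. Qed.

Lemma pcE1 : (((2%:R + 'X) : {poly rat})%:P : PP) = 2%:R + tt.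
Proof. by rewrite rmorphD /= polyC_natr. Qed.
Lemma pcE2 : (((2%:R * (1 + 'X)) : {poly rat})%:P : PP) = 2%:R * (1 + tt).
Proof. by rewrite /tt !rmorphM !rmorphD /= !rmorph1; ring. Qed.
Lemma pcE3 : (((2%:R * (2%:R + 'X)) : {poly rat})%:P : PP) = 2%:R * (2%:R + tt).
Proof. by rewrite /tt !rmorphM !rmorphD /= ?rmorph1 ?polyC_natr; ring. Qed.
Lemma pcE4 : ((('X ^+ 2) : {poly rat})%:P : PP) = tt ^+ 2.
Proof. by rewrite rmorphXn. Qed.

Definition aS : series := fun n => if n == 0%N then 1 else if n == 1%N then 2%:R + 'X else 0.
Definition cS : series := fun k => if k == 1%N then 2%:R * (1 + 'X) else 0.
Definition SS : series := fun n => aS n + smul cS Fs n.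

Lemma T1a : SS 0%N = 1.
Proof. by rewrite /SS smul_c1 addr0. Qed.

Lemma T1b n : smul SS SS n =
         (if n == 0%N then 1 else if n == 1%N then 2%:R * (2%:R + 'X)
          else if n == 2%N then 'X ^+ 2 else 0).
Proof.
set N := n.+2; set F := tr N Fs.
set A : PP := 1 + ((2%:R + 'X) : {poly rat})%:P * 'X.
set C : PP := ((2%:R * (1 + 'X)) : {poly rat})%:P * 'X.
have h1 : eqm N (tr N SS) (A + C * F).
  move=> i Hi; rewrite coef_tr Hi /SS /cS smul_c1 coefD /A /C coefD coef1 coefCM coefX.
  rewrite -mulrA coefCM coefXM /aS.
  case: i Hi => [|[|i]] Hi /=; rewrite ?mulr0 ?mulr1 ?addr0 ?add0r //.
    by rewrite coef_tr /= ?Fs0 mulr0 addr0.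
  by rewrite coef_tr ifT //; lia.
have [r Hr] := KEY n.
have e : (A + C * F) * (A + C * F) =
   (1 + ((2%:R * (2%:R + 'X)) : {poly rat})%:P * 'X + (('X ^+ 2) : {poly rat})%:P * 'X ^+ 2)
   + 4%:R * (1 + tt) * ('X * EF F).
  by rewrite /A /C pcE1 pcE2 pcE3 pcE4 /EF; ring.
rewrite -(@coef_tr_mul N SS SS) // (eqm_mul _ _ _ _ _ h1 h1) // e Hr.
rewrite coefD mulrA coefMXn; have -> : (n < n.+2)%N by lia.
rewrite addr0 !coefD coef1 !coefCM coefX coefXn.
case: n {N F h1 Hr e} => [|[|[|n]]] /=; rewrite ?mulr0 ?mulr1 ?addr0 ?add0r //.
Qed.

Lemma fD_X k : 'X * fDelta k = (-1) ^+ k * ((1 + 'X) ^+ k - 1).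
Proof.
rewrite fD_E subrX1 /ee [1 + 'X]addrC addrK; ring.
Qed.

Lemma T3 n : scomp fDelta Fs n = sx n.
Proof.
set N := n.+2; set F := tr N Fs.
set P : PP := \sum_(k < N) (fDelta k)%:P * F ^+ k.
have hP : P`_n = scomp fDelta Fs n.
  rewrite /P coef_sum /scomp big_ord_recr /= coefCM coef_tr_pow //.
  rewrite spow_vanish // mulr0 addr0; apply: eq_bigr => k _.
  by rewrite coefCM coef_tr_pow.
set u : PP := (-1 - tt) * F; set v : PP := - F.
set Su := \sum_(k < N) u ^+ k; set Sv := \sum_(k < N) v ^+ k.
have eP : tt * P = Su - Sv.
  rewrite /P /Su /Sv -sumrB mulr_sumr; apply: eq_bigr => k _.
  rewrite mulrA /tt -rmorphM fD_X rmorphM rmorphB rmorphXn /= rmorph1.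
  rewrite rmorphXn rmorphD rmorphN /= !rmorph1 /u /v /tt.
  have -> : -1 - ('X : {poly rat})%:P = (-1) * (1 + ('X : {poly rat})%:P) by ring.
  rewrite -[- F]mulN1r !exprMn; ring.
have eu : u ^+ N - 1 = (u - 1) * Su by rewrite subrX1.
have ev : v ^+ N - 1 = (v - 1) * Sv by rewrite subrX1.
have [|r5 e5] := @eqm_0X F; first by rewrite coef_tr.
have eU : u ^+ N = ((-1 - tt) ^+ N * r5 ^+ N) * 'X^N by rewrite /u e5 !exprMn mulrA.
have eV : v ^+ N = ((-1) ^+ N * r5 ^+ N) * 'X^N.
  by rewrite /v e5 [LHS]exprNn exprMn mulrA.
have [rK eK] := KEY n.
set A := (1 - u) * (1 - v).
set Z := tt * (P - 'X).
have hZ : 'X * (A * Z) = (- tt * rK - 'X * (1 - v) * ((-1 - tt) ^+ N * r5 ^+ N)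
                           + 'X * (1 - u) * ((-1) ^+ N * r5 ^+ N)) * 'X^N.
  have z1 : tt * P - (Su - Sv) = 0 by rewrite eP subrr.
  have z2 : u ^+ N - 1 - (u - 1) * Su = 0 by rewrite eu subrr.
  have z3 : v ^+ N - 1 - (v - 1) * Sv = 0 by rewrite ev subrr.
  have z4 : 'X * EF F - rK * 'X^N = 0 by rewrite eK subrr.
  have z5 : u ^+ N - ((-1 - tt) ^+ N * r5 ^+ N) * 'X^N = 0 by rewrite {1}eU subrr.
  have z6 : v ^+ N - ((-1) ^+ N * r5 ^+ N) * 'X^N = 0 by rewrite {1}eV subrr.
  have E0 : ('X * A) * (tt * P - (Su - Sv)) + ('X * (1 - v)) * (u ^+ N - 1 - (u - 1) * Su)
     - ('X * (1 - u)) * (v ^+ N - 1 - (v - 1) * Sv) - tt * ('X * EF F - rK * 'X^N)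
     - ('X * (1 - v)) * (u ^+ N - ((-1 - tt) ^+ N * r5 ^+ N) * 'X^N)
     + ('X * (1 - u)) * (v ^+ N - ((-1) ^+ N * r5 ^+ N) * 'X^N) = 0.
    by rewrite z1 z2 z3 z4 z5 z6 !mulr0 !subr0 !addr0.
  move: E0; rewrite /A /Z /u /v /EF.
  move: (u ^+ N) (v ^+ N) ('X^N) ((-1 - tt) ^+ N) ((-1) ^+ N) (r5 ^+ N) => U V X c1 c2 c3 E0.
  apply/eqP; rewrite -subr_eq0 -E0; apply/eqP; ring.
have h1 : eqm N ('X * (A * Z)) 0 by apply: eqmX; rewrite add0r hZ.
have h2 := eqmXM _ _ h1.
have A0 : A`_0 = 1.
  rewrite /A coef0M !coefB coef1 /u /v coefN coef0M coef_tr /=; ring.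
have h3 := eqm_cancel _ _ _ A0 h2.
have := h3 n (ltnSn n); rewrite /Z coef0 /tt coefCM => /eqP.
rewrite mulf_eq0 polyX_eq0 /= coefB subr_eq0 => /eqP.
by rewrite hP coefX /sx; case: eqP.
Qed.

Lemma InE (T : eqType) (x : T) s : List.In x s <-> x \in s.
Proof.
elim: s => [|y s IH] /=; first by split.
rewrite in_cons; split.
  by case=> [->|/IH ->]; rewrite ?eqxx ?orbT.
by case/orP=> [/eqP->|/IH]; [left | right].
Qed.

Lemma NoDup_uniq (T : eqType) (s : seq T) : List.NoDup s -> uniq s.
Proof.
elim: s => [//|x s IH] /List.NoDup_cons_iff [Hx Hs] /=.
rewrite IH // andbT; apply/negP => /InE; exact: Hx.
Qed.

Lemma pK_b n s : enumerates n s -> pK n s = b n.+1.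
Proof.
case=> ND Hin; rewrite /pK /b.
have Hp : perm_eq s (trees n.+2 n.+1).
  apply: uniq_perm; rewrite ?trees_uniq ?NoDup_uniq // => x.
  apply/idP/idP.
    move=> /InE /Hin [Vx Lx]; exact: trees_complete.
  by move=> /trees_sound /andP[Vx /eqP Lx]; apply/InE/Hin.
rewrite (perm_big _ Hp); apply: eq_big_seq => x /trees_sound /andP[_ /eqP Lx].
by rewrite /w Lx subn1.
Qed.

Theorem corollary4p4 (s : nat -> seq tree)
  (Hs : forall n, (1 <= n)%N -> enumerates n (s n)) :
  let fK : series := fun n => if n is 0 then 0 else (-1) ^+ n * pK n (s n) in
  (exists S : series,
      S 0%N = 1 /\
      (forall n, smul S S n =
         (if n == 0%N then 1 else if n == 1%N then 2%:R * (2%:R + 'X)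
          else if n == 2%N then 'X ^+ 2 else 0)) /\
      (forall n, smul (fun k => if k == 1%N then 2%:R * (1 + 'X) else 0) fK n =
         - (if n == 0%N then 1 else if n == 1%N then 2%:R + 'X else 0) + S n))
  /\
  (forall n, smul fDelta
       (fun k => if k == 0%N then 1 else if k == 1%N then 2%:R + 'X
                 else if k == 2%N then 1 + 'X else 0) n = - sx n)
  /\
  (forall n, scomp fDelta fK n = sx n).
Proof.
move=> fK.
have eF : fK = Fs.
  apply: functional_extensionality => -[|n] //.
  by rewrite /fK /Fs pK_b //; apply: Hs.
rewrite eF; split; last by split; [exact: T2 | exact: T3].
exists SS; split; first exact: T1a.
split; first exact: T1b.
by move=> n; rewrite /SS /aS /cS addKr.
Qed.
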